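(* With size notion $s(x)=|x|$ (word length) on $\Sigma^*$, each of the word distances $\mathrm{ed}$, $\mathrm{ned}$, $\mathrm{ged}$, $\mathrm{ced}$ and $\mathrm{prf}$ has the asymptotic separation property: for each such $d$, every sequence $(x_k)$ of words with $\limsup_k|x_k|=\infty$ and every sequence $(y_k)$ of words with $\limsup_k |y_k|<\infty$ satisfy $\lim_{k\to\infty}d(x_k,y_k)=\sup d$, where $\sup d$ is the supremum of the image of $d$.
   Context: $\Sigma$ is a finite alphabet. Edit operations are pairs $(a,b)\in(\Sigma\cup\{\varepsilon\})^2\setminus\{(\varepsilon,\varepsilon)\}$; an edit path from $x$ to $y$ is a sequence $p=(a_1,b_1)\cdots(a_n,b_n)$ of edit operations with $a_1\cdots a_n=x$ and $b_1\cdots b_n=y$; $|p|=n$ and (uniform weights) $\mathrm{wgt}(p)=|\{i: a_i\neq b_i\}|$. $\mathrm{ed}(x,y)=\min_p \mathrm{wgt}(p)$ (Levenshtein distance); $\mathrm{ned}(x,y)=\min_p \mathrm{wgt}(p)/|p|$ over edit paths $p$ from $x$ to $y$ ($\mathrm{ned}(\varepsilon,\varepsilon)=0$); $\mathrm{ged}(x,y)=\frac{2\,\mathrm{ed}(x,y)}{|x|+|y|+\mathrm{ed}(x,y)}$ ($0$ if $x=y=\varepsilon$). For words $u,u'$ with $\mathrm{ed}(u,u')=1$ put $\mathrm{ced}(u,u')=1/\max(|u|,|u'|)$; for a sequence $\rho=(u_0,\dots,u_k)$ with $\mathrm{ed}(u_{i},u_{i+1})=1$ put $\mathrm{ced}(\rho)=\sum_{i=1}^k\mathrm{ced}(u_{i-1},u_i)$,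 and $\mathrm{ced}(x,y)=\min\{\mathrm{ced}(\rho): \rho=(u_0,\dots,u_k),u_0=x,u_k=y\}$. $\mathrm{prf}(x,y)=|x|+|y|-2\max\{|z|: x,y\in z\Sigma^*\}$. *)

(* Defs.v *)
From mathcomp Require Import all_boot all_order all_algebra.
From mathcomp Require Import all_classical all_reals all_analysis.
Set Implicit Arguments. Unset Strict Implicit. Unset Printing Implicit Defensive.
Import Order.TTheory GRing.Theory Num.Theory.
Local Open Scope classical_set_scope.
Local Open Scope ring_scope.

Section WordDistances.
Variables (R : realType) (Sigma : finType).

Definition word := seq Sigma.

(* edit operations (a,b) in (Sigma ∪ {eps})^2 \ {(eps,eps)}; eps is None *)
Definition edit_op := (option Sigma * option Sigma)%type.
Definition is_edit_op (o : edit_op) : bool := (o.1 != None) || (o.2 != None).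

Definition opt_word (a : option Sigma) : word :=
  if a is Some c then [:: c] else [::].

Definition edit_path (x y : word) (p : seq edit_op) : Prop :=
  all is_edit_op p /\
  flatten (map (fun o => opt_word o.1) p) = x /\
  flatten (map (fun o => opt_word o.2) p) = y.

Definition wgt (p : seq edit_op) : nat := count (fun o : edit_op => o.1 != o.2) p.

Definition ed (x y : word) : R :=
  inf [set (wgt p)%:R | p in [set p | edit_path x y p]].

Definition ned (x y : word) : R :=
  if (x == [::]) && (y == [::]) then 0
  else inf [set (wgt p)%:R / (size p)%:R | p in [set p | edit_path x y p]].

Definition ged (x y : word) : R :=
  if (x == [::]) && (y == [::]) then 0
  else 2 * ed x y / ((size x)%:R + (size y)%:R + ed x y).

(* cost of a chain u0 = u, u1, ..., uk (given as u and the list s = u1..uk) *)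
Fixpoint ced_cost (u : word) (s : seq word) : R :=
  if s is v :: s' then ((maxn (size u) (size v))%:R)^-1 + ced_cost v s' else 0.

Definition ed1_rel : rel word := fun u v => ed u v == 1.

Definition ced (x y : word) : R :=
  inf [set ced_cost x s | s in [set s | path ed1_rel x s /\ last x s = y]].

Definition lcp (x y : word) : nat :=
  \max_(i < (size x).+1 | prefix (take i x) y) (size (take i x)).

Definition prf (x y : word) : R := ((size x + size y - 2 * lcp x y)%N)%:R.

Definition sup_dist (d : word -> word -> R) : \bar R :=
  ereal_sup (range (fun p : word * word => (d p.1 p.2)%:E)).

Definition asymp_sep (d : word -> word -> R) : Prop :=
  forall x y : nat -> word,
    (forall M : nat, \forall k \near \oo, (M <= size (x k))%N) ->
    (exists M : nat, \forall k \near \oo, (size (y k) <= M)%N) ->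
    (fun k => (d (x k) (y k))%:E) @ \oo --> sup_dist d.

End WordDistances.

(* Main.v *)
Require Import Defs.
From mathcomp Require Import all_boot all_order all_algebra.
From mathcomp Require Import all_classical all_reals all_analysis.
From mathcomp Require Import ring lra zify.
Set Implicit Arguments. Unset Strict Implicit. Unset Printing Implicit Defensive.
Import Order.TTheory GRing.Theory Num.Theory.
Local Open Scope classical_set_scope.
Local Open Scope ring_scope.

Section Comb.
Variable Sigma : finType.
Implicit Types (x y u : word Sigma) (p : seq (edit_op Sigma)).

Lemma count_le3 (P : pred (edit_op Sigma)) (f g h : pred (edit_op Sigma)) p :
  (forall o, P o -> (f o <= g o + h o)%N) -> all P p ->
  (count f p <= count g p + count h p)%N.
Proof.
move=> H; elim: p => //= o p IH /andP[Po Pp].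
have := H o Po; have := IH Pp; lia.
Qed.

Lemma size_xs p : size (flatten (map (fun o : edit_op Sigma => opt_word o.1) p))
  = count (fun o : edit_op Sigma => o.1 != None) p.
Proof. by elim: p => //= [[[a|] b]] p IH; rewrite size_cat IH. Qed.

Lemma size_ys p : size (flatten (map (fun o : edit_op Sigma => opt_word o.2) p))
  = count (fun o : edit_op Sigma => o.2 != None) p.
Proof. by elim: p => //= [[a [b|]]] p IH; rewrite size_cat IH. Qed.

Lemma path_size1 x y p : edit_path x y p -> (size x <= wgt p + size y)%N.
Proof.
case=> _ [<- <-]; rewrite size_xs size_ys /wgt.
apply: (@count_le3 predT) => //; last by apply/allP.
by case=> [[a|] [b|]] _ //=; case: eqP.
Qed.

Lemma path_size2 x y p : edit_path x y p -> (size y <= wgt p + size x)%N.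
Proof.
case=> _ [<- <-]; rewrite size_xs size_ys /wgt.
apply: (@count_le3 predT) => //; last by apply/allP.
by case=> [[a|] [b|]] _ //=; case: eqP.
Qed.

Lemma path_size3 x y p : edit_path x y p -> (size p <= wgt p + size y)%N.
Proof.
case=> Hall [_ <-]; rewrite size_ys /wgt -count_predT.
apply: (@count_le3 (@is_edit_op Sigma) predT) => //.
by case=> [[a|] [b|]] //=; case: eqP.
Qed.

Lemma path_size4 x y p : edit_path x y p -> (size x <= size p)%N.
Proof. by case=> _ [<- _]; rewrite size_xs count_size. Qed.

Lemma wgt_le_size p : (wgt p <= size p)%N.
Proof. exact: count_size. Qed.

Definition p0 x y : seq (edit_op Sigma) :=
  map (fun c => (Some c, None)) x ++ map (fun c => (None, Some c)) y.

Lemma p0_path x y : edit_path x y (p0 x y).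
Proof.
rewrite /edit_path /p0 all_cat !all_map; split.
  by apply/andP; split; apply/allP.
rewrite !map_cat !flatten_cat; split.
  have -> : flatten [seq opt_word o.1 | o <- [seq (None, Some c) | c <- y]] = [::] :> word Sigma.
    by elim: y.
  by rewrite cats0; elim: x => //= c x ->.
have -> : flatten [seq opt_word o.2 | o <- [seq (Some c, None) | c <- x]] = [::] :> word Sigma.
  by elim: x.
by elim: y => //= c y ->.
Qed.

Lemma p0_wgt x y : wgt (p0 x y) = (size x + size y)%N.
Proof. by rewrite /wgt /p0 count_cat !count_map !(eq_count (a2 := predT)) // !count_predT. Qed.

Lemma p0_size x y : size (p0 x y) = (size x + size y)%N.
Proof. by rewrite /p0 size_cat !size_map. Qed.

Definition idp u : seq (edit_op Sigma) := map (fun c => (Some c, Some c)) u.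

Lemma idp_path u : all (@is_edit_op Sigma) (idp u) /\
  flatten (map (fun o => opt_word o.1) (idp u)) = u /\
  flatten (map (fun o => opt_word o.2) (idp u)) = u.
Proof.
split; first by rewrite all_map; apply/allP.
by split; elim: u => //= c u ->.
Qed.

Lemma idp_wgt u : wgt (idp u) = 0%N.
Proof. by elim: u => //= c u; rewrite /wgt /= eqxx. Qed.

Lemma del_path a u : edit_path (a :: u) u ((Some a, None) :: idp u).
Proof. by have [H1 [H2 H3]] := idp_path u; split => //=; rewrite ?H2 ?H3. Qed.

Lemma ins_path a u : edit_path u (a :: u) ((None, Some a) :: idp u).
Proof. by have [H1 [H2 H3]] := idp_path u; split => //=; rewrite ?H2 ?H3. Qed.



End Comb.

Section EdLemmas.
Variables (R : realType) (Sigma : finType).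
Implicit Types (x y u : word Sigma) (p : seq (edit_op Sigma)).

Definition edS x y : set R := [set (wgt p)%:R | p in [set p | edit_path x y p]].

Lemma edS_lb x y : lbound (edS x y) 0.
Proof. by move=> _ [p _ <-]. Qed.

Lemma edS_ne x y : nonempty (edS x y).
Proof. by exists (wgt (p0 x y))%:R; exists (p0 x y) => //; exact: p0_path. Qed.

Lemma ed_ge0 x y : 0 <= @ed R Sigma x y.
Proof. by apply: lb_le_inf; [exact: edS_ne | exact: edS_lb]. Qed.

Lemma ed_le_path x y p : edit_path x y p -> @ed R Sigma x y <= (wgt p)%:R.
Proof.
move=> Hp; apply: (ge_inf (E := edS x y)); first by exists 0; exact: edS_lb.
by exists p.
Qed.

Lemma ed_le x y : @ed R Sigma x y <= (size x + size y)%:R.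
Proof. by rewrite -p0_wgt; apply: ed_le_path; exact: p0_path. Qed.

Lemma ed_ge1 x y : (size x)%:R - (size y)%:R <= @ed R Sigma x y.
Proof.
apply: lb_le_inf; first exact: edS_ne.
move=> _ [p /path_size1 Hp <-]; rewrite lerBlDr -natrD ler_nat; lia.
Qed.

Lemma ed_ge2 x y : (size y)%:R - (size x)%:R <= @ed R Sigma x y.
Proof.
apply: lb_le_inf; first exact: edS_ne.
move=> _ [p /path_size2 Hp <-]; rewrite lerBlDr -natrD ler_nat; lia.
Qed.

Lemma ed_del a u : @ed R Sigma (a :: u) u = 1.
Proof.
apply/eqP; rewrite eq_le; apply/andP; split.
  have -> : (1 : R) = (wgt ((Some a, None) :: idp u))%:R.
    by rewrite /wgt /= -/(wgt _) idp_wgt.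
  by apply: ed_le_path; exact: del_path.
by have := ed_ge1 (a :: u) u; rewrite /= -addn1 natrD addrAC subrr add0r.
Qed.

Lemma ed_ins a u : @ed R Sigma u (a :: u) = 1.
Proof.
apply/eqP; rewrite eq_le; apply/andP; split.
  have -> : (1 : R) = (wgt ((None, Some a) :: idp u))%:R.
    by rewrite /wgt /= -/(wgt _) idp_wgt.
  by apply: ed_le_path; exact: ins_path.
by have := ed_ge2 u (a :: u); rewrite /= -addn1 natrD addrAC subrr add0r.
Qed.

End EdLemmas.

Section OtherLemmas.
Variables (R : realType) (Sigma : finType).
Implicit Types (x y u v : word Sigma) (p : seq (edit_op Sigma)).

Lemma ned_le1 x y : @ned R Sigma x y <= 1.
Proof.
rewrite /ned; case: ifPn => // Hxy.
have Hpos : (0 < size x + size y)%N.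
  by case: x Hxy => //; case: y.
apply: (@ge_inf _ [set (wgt p)%:R / (size p)%:R | p in [set p | edit_path x y p]]).
  by exists 0 => _ [p _ <-]; rewrite divr_ge0.
exists (p0 x y); first exact: p0_path.
by rewrite p0_wgt p0_size divff // pnatr_eq0 -lt0n.
Qed.

Lemma ned_lb x y : (0 < size x)%N ->
  1 - (size y)%:R / (size x)%:R <= @ned R Sigma x y.
Proof.
move=> Hx; rewrite /ned; case: ifPn => [/andP[/eqP Ex _]|_]; first by rewrite Ex in Hx.
apply: lb_le_inf.
  by exists ((wgt (p0 x y))%:R / (size (p0 x y))%:R); exists (p0 x y) => //; exact: p0_path.
move=> _ [p Hp <-].
have H3 := path_size3 Hp; have H4 := path_size4 Hp.
have HX : (0 : R) < (size x)%:R by rewrite ltr0n.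
have HP : (0 : R) < (size p)%:R by rewrite ltr0n; lia.
rewrite ler_pdivlMr //.
set t := (size y)%:R / (size x)%:R.
have t0 : 0 <= t by rewrite divr_ge0.
have tX : t * (size x)%:R = (size y)%:R by rewrite /t divfK // gt_eqF.
have XP : (size x)%:R <= (size p)%:R :> R by rewrite ler_nat.
have PW : (size p)%:R <= (wgt p)%:R + (size y)%:R :> R by rewrite -natrD ler_nat.
nra.
Qed.

Lemma ged_le1 x y : @ged R Sigma x y <= 1.
Proof.
rewrite /ged; case: ifPn => // Hxy.
have Hpos : (0 < size x + size y)%N by case: x Hxy => //; case: y.
have e0 := @ed_ge0 R Sigma x y; have e1 := @ed_le R Sigma x y.
have D : 0 < (size x)%:R + (size y)%:R + ed R x y :> R.
  by rewrite -natrD; apply: ltr_pwDl => //; rewrite ltr0n.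
rewrite ler_pdivrMr // mul1r; rewrite natrD in e1; lra.
Qed.

Lemma ged_lb x y : (0 < size x)%N ->
  1 - (size y)%:R / (size x)%:R <= @ged R Sigma x y.
Proof.
move=> Hx; rewrite /ged; case: ifPn => [/andP[/eqP Ex _]|_]; first by rewrite Ex in Hx.
have e0 := @ed_ge0 R Sigma x y; have e1 := @ed_ge1 R Sigma x y.
have HX : (0 : R) < (size x)%:R by rewrite ltr0n.
have Y0 : (0 : R) <= (size y)%:R by [].
have D : 0 < (size x)%:R + (size y)%:R + ed R x y :> R.
  by lra.
rewrite ler_pdivlMr //.
set t := (size y)%:R / (size x)%:R.
have t0 : 0 <= t by rewrite divr_ge0.
have tX : t * (size x)%:R = (size y)%:R by rewrite /t divfK // gt_eqF.
move: e1 e0 D; set e := ed R x y; set X := (size x)%:R; set Y := (size y)%:R => e1 e0 D.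
have key : (X - Y) * (X + Y + e) <= 2 * e * X by nra.
nra.
Qed.

Lemma prf_ge x y : (size x)%:R - (size y)%:R <= @prf R Sigma x y.
Proof.
rewrite /prf.
have L : (lcp x y <= size y)%N.
  by apply/bigmax_leqP => i /size_prefix.
rewrite lerBlDr -natrD ler_nat; lia.
Qed.

Definition H (n : nat) : R := series (@harmonic R) n.

Lemma H_nd : {homo H : m n / (m <= n)%N >-> m <= n}.
Proof.
move=> m n mn; rewrite /H.
have := @nondecreasing_series R (@harmonic R) xpredT 0 _ m n mn.
by apply => k _ _; rewrite /harmonic /= invr_ge0.
Qed.

Lemma H_unb (r : R) : exists n, r <= H n.
Proof.
have := nondecreasing_dvgn_lt H_nd (@dvg_harmonic R).
by move/cvgryPge => /(_ r) /filter_ex.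
Qed.

Lemma H_step a b : (a <= b.+1)%N -> (b <= a.+1)%N -> H a - H b <= (maxn a b)%:R^-1.
Proof.
move=> h1 h2.
case: (ltngtP a b) => E.
- have {}E : b = a.+1 by lia.
  rewrite E /H -opprB seriesSB /harmonic /=.
  by apply: (@le_trans _ _ 0); rewrite ?oppr_le0 invr_ge0.
- have {}E : a = b.+1 by lia.
  by rewrite E /H seriesSB /harmonic /=.
- by subst; rewrite subrr invr_ge0.
Qed.

Lemma ed1_size u v : @ed1_rel R Sigma u v -> (size u <= (size v).+1)%N /\ (size v <= (size u).+1)%N.
Proof.
move=> /eqP E; have h1 := @ed_ge1 R Sigma u v; have h2 := @ed_ge2 R Sigma u v.
rewrite E in h1 h2.
have k1 : (size u <= size v + 1)%N by rewrite -(ler_nat R) natrD; lra.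
have k2 : (size v <= size u + 1)%N by rewrite -(ler_nat R) natrD; lra.
split; lia.
Qed.

Lemma cost_lb s u : path (@ed1_rel R Sigma) u s ->
  H (size u) - H (size (last u s)) <= @ced_cost R Sigma u s.
Proof.
elim: s u => [|v s IH] u /=; first by rewrite subrr.
move=> /andP[Huv Hs].
have [h1 h2] := ed1_size Huv.
have := H_step h1 h2; have := IH v Hs.
move: (H (size u)) (H (size v)) (H (size (last v s))) => a b c; lra.
Qed.

Definition reach u v := exists s, path (@ed1_rel R Sigma) u s /\ last u s = v.

Lemma reach_trans u v w : reach u v -> reach v w -> reach u w.
Proof.
move=> [s1 [P1 L1]] [s2 [P2 L2]]; exists (s1 ++ s2).
by rewrite cat_path last_cat L1 P1 P2 L2.
Qed.

Lemma reach_all x y : reach x y.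
Proof.
have A : forall x0, reach x0 [::].
  elim=> [|a x0 IH]; first by exists [::].
  apply: reach_trans IH; exists [:: x0]; split => //=.
  by rewrite andbT /ed1_rel ed_del.
have B : forall y0, reach [::] y0.
  elim=> [|a y0 IH]; first by exists [::].
  apply: reach_trans IH _; exists [:: a :: y0]; split => //=.
  by rewrite andbT /ed1_rel ed_ins.
exact: reach_trans (A x) (B y).
Qed.

Lemma ced_lb x y : H (size x) - H (size y) <= @ced R Sigma x y.
Proof.
apply: lb_le_inf.
  have [s [P L]] := reach_all x y.
  by exists (@ced_cost R Sigma x s); exists s.
by move=> _ [s [P L] <-]; rewrite -L; exact: cost_lb.
Qed.

End OtherLemmas.

Section Generic.
Variables (R : realType) (Sigma : finType).

Lemma nat_unb (r : R) : exists n : nat, r <= n%:R.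
Proof.
exists (Num.Def.archi_bound `|r|); apply: (le_trans (ler_norm r)).
by apply/ltW/archi_boundP.
Qed.

Lemma sepA (d : word Sigma -> word Sigma -> R) (F : nat -> R) :
  {homo F : m n / (m <= n)%N >-> m <= n} -> (forall r, exists n, r <= F n) ->
  (forall x y, F (size x) - F (size y) <= d x y) -> asymp_sep d.
Proof.
move=> Fnd Fub Hd x y Hx [M HM].
have Hinf : forall r, \forall k \near \oo, r <= d (x k) (y k).
  move=> r; have [n Hn] := Fub (r + F M).
  near=> k.
  have h1 : (n <= size (x k))%N by near: k; exact: Hx.
  have h2 : (size (y k) <= M)%N by near: k; exact: HM.
  have := Hd (x k) (y k); have := Fnd _ _ h1; have := Fnd _ _ h2; lra.
have Hs : sup_dist d = +oo%E.
  have ub : forall k, ((d (x k) (y k))%:E <= sup_dist d)%E.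
    by move=> k; apply: ereal_sup_ubound; exists (x k, y k).
  move: ub; case: (sup_dist d) => [s| |] // ub.
  - have [k Hk] := filter_ex (Hinf (s + 1)); move/(_ k): ub; rewrite lee_fin => ub; exfalso; lra.
  - by have [k Hk] := filter_ex (Hinf 0); have := ub k.
rewrite Hs; apply/cvgeyPge => A; near=> k; rewrite lee_fin; near: k; exact: Hinf.
Unshelve. all: by end_near. Qed.

Lemma sepB (d : word Sigma -> word Sigma -> R) :
  (forall x y, d x y <= 1) ->
  (forall x y, (0 < size x)%N -> 1 - (size y)%:R / (size x)%:R <= d x y) ->
  asymp_sep d.
Proof.
move=> H1 H2 x y Hx [M HM].
have Hs : sup_dist d = 1%:E.
  apply/eqP; rewrite eq_le; apply/andP; split.
    by apply: ge_ereal_sup => _ [[a b] _ <-]; rewrite lee_fin; exact: H1.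
  have [k Hk] := filter_ex (Hx 1%N).
  apply: (le_trans _ (ereal_sup_ubound _)); last by exists (x k, [::]).
  by rewrite lee_fin /=; have := H2 (x k) [::] Hk; rewrite /= mul0r subr0.
rewrite Hs; apply: cvg_EFin; first by near=> k.
apply/cvgrPdist_le => eps eps0.
have [N HN] := nat_unb (M%:R / eps).
near=> k.
have h1 : (N.+1 <= size (x k))%N by near: k; exact: Hx.
have h2 : (size (y k) <= M)%N by near: k; exact: HM.
rewrite /= ger0_norm ?subr_ge0 //.
have := H2 _ (y k) (leq_trans (ltn0Sn N) h1).
have HX : (0 : R) < (size (x k))%:R by rewrite ltr0n; lia.
have : (size (y k))%:R / (size (x k))%:R <= eps.
  rewrite ler_pdivrMr //.
  have e1 : (size (y k))%:R <= M%:R :> R by rewrite ler_nat.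
  have e2 : N%:R <= (size (x k))%:R :> R by rewrite ler_nat; lia.
  rewrite ler_pdivrMr // in HN.
  nra.
lra.
Unshelve. all: by end_near. Qed.

End Generic.

Theorem mainTheorem5 (R : realType) (Sigma : finType) :
  asymp_sep (@ed R Sigma) /\ asymp_sep (@ned R Sigma) /\ asymp_sep (@ged R Sigma) /\
  asymp_sep (@ced R Sigma) /\ asymp_sep (@prf R Sigma).
Proof.
split.
  apply: (@sepA R Sigma _ (fun n => n%:R)); last exact: ed_ge1.
    by move=> m n mn; rewrite ler_nat.
  exact: nat_unb.
split; first by apply: sepB; [exact: ned_le1 | exact: ned_lb].
split; first by apply: sepB; [exact: ged_le1 | exact: ged_lb].
split.
  by apply: (@sepA R Sigma _ (@H R)); [exact: H_nd | exact: H_unb | exact: ced_lb].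
apply: (@sepA R Sigma _ (fun n => n%:R)); last exact: prf_ge.
  by move=> m n mn; rewrite ler_nat.
exact: nat_unb.
Qed.
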